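(* Let $H$ be a Hilbert space and $T$ a densely defined closed operator on $H$ with closed range. Then $T$ is selfadjoint if and only if $w(T)$ is selfadjoint.
   Context: For a densely defined closed operator $A$ with closed range, $C(A)=D(A)\cap N(A)^{\perp}$, and the Moore–Penrose inverse $A^{\dagger}$ is defined on $R(A)\oplus^{\perp}R(A)^{\perp}$ by $A^{\dagger}y=(A|_{C(A)})^{-1}y$ for $y\in R(A)$ and $A^{\dagger}y=0$ for $y\in R(A)^{\perp}$. The generalized Cauchy dual is $w(A)=A(A^{*}A)^{\dagger}$ (products on natural domains). *)

(* Defs.v *)
(* MathComp + MathComp-Analysis, scalars R[i] (complex numbers
   over a real type R, from mathcomp-real-closed). Unbounded operators are
   represented by their graphs (subsets of H * H). *)
From HB Require Import structures.
From mathcomp Require Import all_boot all_order all_algebra.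
From mathcomp Require Import complex.
From mathcomp Require Import all_classical all_reals topology normedtype sequences.

Set Implicit Arguments.
Unset Strict Implicit.
Unset Printing Implicit Defensive.
Import Order.TTheory GRing.Theory Num.Theory.
Import numFieldNormedType.Exports.
Local Open Scope ring_scope.
Local Open Scope classical_set_scope.

Section HilbertOps.
Variables (R : realType) (H : lmodType R[i]) (ip : H -> H -> R[i]).

Definition is_inner_product : Prop :=
  [/\ (forall (a : R[i]) (x y z : H), ip (a *: x + y) z = a * ip x z + ip y z),
      (forall x y : H, ip y x = conjc (ip x y)),
      (forall x : H, 0 <= ip x x) &
      (forall x : H, ip x x = 0 -> x = 0)].

Definition hnormsq (x : H) : R := complex.Re (ip x x).

Definition hconv (u : nat -> H) (x : H) : Prop :=
  (fun n => hnormsq (u n - x)) @ \oo --> (0 : R).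

Definition hcauchy (u : nat -> H) : Prop :=
  forall e : R, 0 < e -> exists N : nat, forall m n : nat,
    (N <= m)%N -> (N <= n)%N -> hnormsq (u m - u n) < e.

Definition is_hilbert : Prop :=
  is_inner_product /\ forall u, hcauchy u -> exists x, hconv u x.

Definition is_operator (A : set (H * H)) : Prop :=
  [/\ A (0, 0),
      (forall (a : R[i]) p q, A p -> A q -> A (a *: p.1 + q.1, a *: p.2 + q.2)) &
      (forall x y z, A (x, y) -> A (x, z) -> y = z)].

Definition dom (A : set (H * H)) : set H := [set x | exists y, A (x, y)].
Definition ran (A : set (H * H)) : set H := [set y | exists x, A (x, y)].
Definition ker (A : set (H * H)) : set H := [set x | A (x, 0)].
Definition orth (S : set H) : set H := [set y | forall x, S x -> ip x y = 0].

Definition seq_closed (S : set H) : Prop :=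
  forall u x, (forall n, S (u n)) -> hconv u x -> S x.

Definition densely_defined (A : set (H * H)) : Prop :=
  forall x, exists u : nat -> H, (forall n, dom A (u n)) /\ hconv u x.

Definition closed_operator (A : set (H * H)) : Prop :=
  forall (u v : nat -> H) x y, (forall n, A (u n, v n)) ->
    hconv u x -> hconv v y -> A (x, y).

Definition closed_range (A : set (H * H)) : Prop := seq_closed (ran A).

Definition adjoint (A : set (H * H)) : set (H * H) :=
  [set p | forall x y, A (x, y) -> ip y p.1 = ip x p.2].

Definition selfadjoint (A : set (H * H)) : Prop := A = adjoint A.

Definition opcomp (A B : set (H * H)) : set (H * H) :=
  [set p | exists z, B (p.1, z) /\ A (z, p.2)].

Definition carrier (A : set (H * H)) : set H := dom A `&` orth (ker A).

(** Moore–Penrose inverse on R(A) ⊕ R(A)^⊥ :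
    A†(y1 + y2) = (A|C(A))^{-1} y1 for y1 ∈ R(A), y2 ∈ R(A)^⊥ *)
Definition mp_inverse (A : set (H * H)) : set (H * H) :=
  [set p | exists y1 y2, [/\ p.1 = y1 + y2, orth (ran A) y2,
                             carrier A p.2 & A (p.2, y1)]].

(** generalized Cauchy dual w(A) = A (A* A)† *)
Definition cauchy_dual (A : set (H * H)) : set (H * H) :=
  opcomp A (mp_inverse (opcomp (adjoint A) A)).

End HilbertOps.

(* Main.v *)
Require Import Defs.
From HB Require Import structures.
From mathcomp Require Import all_boot all_order all_algebra.
From mathcomp Require Import complex.
From mathcomp Require Import all_classical all_reals topology normedtype sequences.
From mathcomp Require Import ring lra.
Set Implicit Arguments.
Unset Strict Implicit.
Unset Printing Implicit Defensive.
Import Order.TTheory GRing.Theory Num.Theory.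
Import numFieldNormedType.Exports.
Local Open Scope ring_scope.
Local Open Scope classical_set_scope.
Local Open Scope complex_scope.

Section Cplx.
Variable R : realType.
Implicit Types z w : R[i].
Lemma ReD z w : complex.Re (z + w) = complex.Re z + complex.Re w.
Proof. by case: z; case: w. Qed.
Lemma ReN z : complex.Re (- z) = - complex.Re z.
Proof. by case: z. Qed.
Lemma ReJ z : complex.Re (conjc z) = complex.Re z.
Proof. by case: z. Qed.
Lemma ReMC (t : R) z : complex.Re (t%:C * z) = t * complex.Re z.
Proof. by case: z => a b /=; rewrite mul0r subr0. Qed.
Lemma ReMi z : complex.Re ('i%C * z) = - complex.Im z.
Proof. by case: z => a b /=; rewrite mul0r mul1r sub0r. Qed.
Lemma ge0_realC z : 0 <= z -> z = (complex.Re z)%:C /\ 0 <= complex.Re z.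
Proof. by case: z => a c; rewrite lecE /= => /andP[/eqP -> ha]. Qed.
Lemma eq0_ReIm z : complex.Re z = 0 -> complex.Im z = 0 -> z = 0.
Proof. by case: z => a c /= -> ->. Qed.
Lemma conjc_ge0id z : 0 <= z -> conjc z = z.
Proof. by move=> /ge0_realC [-> _]; rewrite conjc_real. Qed.
End Cplx.

Lemma cvg0P (R : realType) (f : nat -> R) : (forall n, 0 <= f n) ->
  (f @ \oo --> (0:R)) <-> (forall e, 0 < e -> exists N, forall n, (N <= n)%N -> f n < e).
Proof.
move=> f0; rewrite cvgrPdist_lt; split => H e e0.
  have [N _ HN] := H e e0; exists N => n /HN /=.
  by rewrite sub0r normrN ger0_norm.
have [N HN] := H e e0; exists N => // n /= /HN.
by rewrite sub0r normrN ger0_norm.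
Qed.

Section Basic.
Variables (R : realType) (V : lmodType R[i]) (ip : V -> V -> R[i]).
Hypothesis hip : is_inner_product ip.

Lemma ip0l x : ip 0 x = 0.
Proof.
case: hip => lin _ _ _; have h := lin 1 0 0 x.
rewrite scale1r addr0 mul1r in h.
by apply: (addrI (ip 0 x)); rewrite addr0 -h.
Qed.
Lemma ipDl x y z : ip (x + y) z = ip x z + ip y z.
Proof. by case: hip => lin _ _ _; have := lin 1 x y z; rewrite scale1r mul1r. Qed.
Lemma ipZl a x z : ip (a *: x) z = a * ip x z.
Proof. by case: hip => lin _ _ _; rewrite -[a *: x]addr0 lin ip0l addr0. Qed.
Lemma ipC x y : ip y x = conjc (ip x y).
Proof. by case: hip. Qed.
Lemma ip0r x : ip x 0 = 0.
Proof. by rewrite ipC ip0l rmorph0. Qed.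
Lemma ipDr x y z : ip x (y + z) = ip x y + ip x z.
Proof. by rewrite ipC ipDl rmorphD /= -!ipC. Qed.
Lemma ipZr a x y : ip x (a *: y) = conjc a * ip x y.
Proof. by rewrite ipC ipZl rmorphM /= -ipC. Qed.
Lemma ipNl x y : ip (- x) y = - ip x y.
Proof. by rewrite -scaleN1r ipZl mulN1r. Qed.
Lemma ipNr x y : ip x (- y) = - ip x y.
Proof. by rewrite -scaleN1r ipZr rmorphN1 mulN1r. Qed.
Lemma ipBl x y z : ip (x - y) z = ip x z - ip y z.
Proof. by rewrite ipDl ipNl. Qed.
Lemma ipBr x y z : ip x (y - z) = ip x y - ip x z.
Proof. by rewrite ipDr ipNr. Qed.
Lemma ip_ge0 x : 0 <= ip x x.
Proof. by case: hip. Qed.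
Lemma ip_eq0 x : ip x x = 0 -> x = 0.
Proof. by case: hip => _ _ _; apply. Qed.

Local Notation q := (hnormsq ip).
Definition bre x y := complex.Re (ip x y).

Lemma ip_self x : ip x x = (q x)%:C.
Proof. by have [] := ge0_realC (ip_ge0 x). Qed.
Lemma q_ge0 x : 0 <= q x.
Proof. by have [] := ge0_realC (ip_ge0 x). Qed.
Lemma q_eq0 x : q x = 0 -> x = 0.
Proof. by move=> h; apply: ip_eq0; rewrite ip_self h. Qed.
Lemma breC x y : bre y x = bre x y.
Proof. by rewrite /bre ipC ReJ. Qed.
Lemma qD x y : q (x + y) = q x + q y + 2 * bre x y.
Proof.
rewrite /hnormsq !ipDl !ipDr !ReD -/(bre x y) -/(bre y x) breC.
rewrite /bre; set a := complex.Re (ip x x); set c := complex.Re (ip y y).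
set d := complex.Re (ip x y); rewrite mulr2n mulrDl mul1r. lra.
Qed.
Lemma breNr x y : bre x (- y) = - bre x y.
Proof. by rewrite /bre ipNr ReN. Qed.
Lemma qN x : q (- x) = q x.
Proof. by rewrite /hnormsq ipNl ipNr opprK. Qed.
Lemma qB x y : q (x - y) = q x + q y - 2 * bre x y.
Proof. by rewrite qD qN breNr mulrN. Qed.
Lemma breZl (t : R) x y : bre (t%:C *: x) y = t * bre x y.
Proof. by rewrite /bre ipZl ReMC. Qed.
Lemma breZr (t : R) x y : bre x (t%:C *: y) = t * bre x y.
Proof. by rewrite breC breZl breC. Qed.
Lemma qZ (t : R) x : q (t%:C *: x) = t ^+ 2 * q x.
Proof. by rewrite /hnormsq ipZl ipZr conjc_real -mulrA !ReMC mulrA -expr2. Qed.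
Lemma bre_self x : bre x x = q x.
Proof. by []. Qed.

Lemma orth_self (S : set V) x : S x -> orth ip S x -> x = 0.
Proof. by move=> Sx /(_ x Sx) /ip_eq0. Qed.
Lemma orth0 (S : set V) : orth ip S 0.
Proof. by move=> x _; rewrite ip0r. Qed.
Lemma orthD (S : set V) x y : orth ip S x -> orth ip S y -> orth ip S (x + y).
Proof. by move=> hx hy w Sw; rewrite ipDr hx // hy // addr0. Qed.
Lemma orthN (S : set V) x : orth ip S x -> orth ip S (- x).
Proof. by move=> hx w Sw; rewrite ipNr hx // oppr0. Qed.
Lemma orthB (S : set V) x y : orth ip S x -> orth ip S y -> orth ip S (x - y).
Proof. by move=> hx hy; apply: orthD => //; apply: orthN. Qed.
Lemma orthl (S : set V) x y : orth ip S x -> S y -> ip x y = 0.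
Proof. by move=> hx Sy; rewrite ipC hx // rmorph0. Qed.

Lemma hconvP0 u x : hconv ip u x <->
  forall e, 0 < e -> exists N, forall n, (N <= n)%N -> q (u n - x) < e.
Proof. by apply: cvg0P => n; apply: q_ge0. Qed.
End Basic.

Lemma small_inv (R : realType) (e : R) : 0 < e ->
  exists N, forall n, (N <= n)%N -> n.+1%:R^-1 < e.
Proof.
move=> e0; exists (Num.truncn e^-1) => n hn.
rewrite invf_plt ?posrE ?ltr0Sn //.
apply: (lt_le_trans (truncnS_gt _)); by rewrite ler_nat ltnS.
Qed.

Section Proj.
Variables (R : realType) (V : lmodType R[i]) (ip : V -> V -> R[i]).
Hypothesis hh : is_hilbert ip.
Local Notation q := (hnormsq ip).
Let hip : is_inner_product ip := proj1 hh.

Lemma hconvP u x : hconv ip u x <->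
  forall e, 0 < e -> exists N, forall n, (N <= n)%N -> q (u n - x) < e.
Proof. by apply: cvg0P => n; apply: q_ge0. Qed.

Lemma q_bound (eta : R) x y : 0 < eta -> eta <= 1 ->
  eta * q (x + y) <= eta * (1 + eta) * q x + 2 * q y.
Proof.
move=> e0 e1; have h := q_ge0 hip (eta%:C *: x - y).
rewrite (((qB hip))) (((qZ hip))) (((breZl hip))) in h; rewrite (((qD hip))).
have hx := q_ge0 hip x; have hy := q_ge0 hip y.
have : 0 <= (1 - eta) * q y by apply: mulr_ge0 => //; lra.
nra.
Qed.

Lemma projection (K : set V) : K 0 ->
  (forall a p r, K p -> K r -> K (a *: p + r)) -> seq_closed ip K ->
  forall h, exists k, K k /\ orth ip K (h - k).
Proof.
move=> K0 Klin Kcl h.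
have KD p r : K p -> K r -> K (p + r).
  by move=> Kp Kr; rewrite -[p]scale1r; apply: Klin.
have KZ a p : K p -> K (a *: p).
  by move=> Kp; rewrite -[_ *: _]addr0; apply: Klin.
pose S := [set r | exists k, K k /\ r = q (h - k)].
have hS : has_inf S.
  split; first by exists (q (h - 0)), 0.
  by exists 0 => r [k [_ ->]]; apply: q_ge0.
pose d := inf S.
have d_le k : K k -> d <= q (h - k).
  by move=> Kk; apply: ge_inf (proj2 hS) _ _; exists k.
have d0 : 0 <= d.
  by apply: lb_le_inf; [case: hS | move=> r [k [_ ->]]; apply: q_ge0].
have adh n : exists k, K k /\ q (h - k) < d + n.+1%:R^-1.
  have inv0 : 0 < n.+1%:R^-1 :> R by rewrite invr_gt0 ltr0Sn.
  have [e [k [Kk ->]] he] := @inf_adherent R S _ inv0 hS.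
  by exists k.
have [ks hks] := choice adh.
have cau : hcauchy ip ks.
  move=> e e0.
  have e4 : 0 < e / 4 by lra.
  have [N HN] := small_inv e4.
  exists N => m n hm hn.
  have [Km hqm] := hks m; have [Kn hqn] := hks n.
  have := HN m hm; have := HN n hn.
  pose mid := (2^-1 : R)%:C *: (ks m + ks n).
  have Kmid : K mid by apply: KZ; apply: KD.
  have hmid := d_le _ Kmid.
  have E : (h - ks m) + (h - ks n) = (2:R)%:C *: (h - mid).
    rewrite scalerBr scalerA -rmorphM mulfV ?pnatr_eq0 // scale1r.
    rewrite rmorph_nat scaler_nat mulr2n opprD !addrA; congr (_ - _).
    by rewrite addrAC.
  have P1 := qD hip (h - ks m) (h - ks n).
  have P2 := qB hip (h - ks m) (h - ks n).
  rewrite E (((qZ hip))) in P1.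
  have E2 : (h - ks m) - (h - ks n) = - (ks m - ks n).
    by rewrite [h - ks m]addrC addrKA opprB opprK addrC.
  rewrite E2 (qN hip) in P2.
  have := q_ge0 hip (h - mid).
  have := q_ge0 hip (ks m - ks n).
  rewrite expr2 in P1; move: hqm hqn; move: (m.+1%:R^-1) (n.+1%:R^-1) => a b.
  clearbody mid; lra.
have [k hk] := proj2 hh ks cau.
have Kk : K k by apply: (Kcl ks) => // n; case: (hks n).
exists k; split => //.
have qle : q (h - k) <= d.
  apply/ler_addgt0Pr => e e0.
  pose eta := e / (e + d + 4).
  have etaE : eta * (e + d + 4) = e.
    by rewrite /eta mulfVK //; apply: lt0r_neq0; lra.
  have eta0 : 0 < eta by apply: divr_gt0 => //; lra.
  have eta1 : eta <= 1.
    rewrite /eta ler_pdivrMr; lra.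
  have [N1 HN1] := (hconvP ks k).1 hk (eta * eta) (mulr_gt0 eta0 eta0).
  have [N2 HN2] := small_inv eta0.
  pose n := maxn N1 N2.
  have hc := HN1 n (leq_maxl _ _).
  have hi := HN2 n (leq_maxr _ _).
  have [_ ha] := hks n.
  have hb := q_bound (h - ks n) (ks n - k) eta0 eta1.
  have E : h - ks n + (ks n - k) = h - k by rewrite addrA subrK.
  rewrite E in hb.
  have := q_ge0 hip (h - k).
  move: (n.+1%:R^-1) hi ha => a hi ha.
  nra.
have orthR x : K x -> bre ip x (h - k) = 0.
  move=> Kx; rewrite (((breC hip))); set b := bre ip (h - k) x.
  have ht t : 2 * t * b <= t ^+ 2 * q x.
    have := d_le (k + t%:C *: x) (KD _ _ Kk (KZ _ _ Kx)).
    rewrite opprD addrA (((qB hip))) (((qZ hip))) (((breZr hip))); rewrite -/b; lra.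
  have [qx0|qxp] := eqVneq (q x) 0.
    by rewrite /b (q_eq0 hip qx0) /bre (ip0r hip).
  have qxp' : 0 < q x by rewrite lt_def qxp q_ge0.
  have := ht (b / q x); rewrite expr2.
  have E : b / q x * q x = b by rewrite mulfVK.
  move: (b / q x) E => t E; nra.
move=> x Kx; apply: eq0_ReIm; first exact: orthR.
have := orthR _ (KZ 'i%C _ Kx); rewrite /bre (ipZl hip) ReMi.
by move/eqP; rewrite oppr_eq0 => /eqP.
Qed.
End Proj.

Section Prod.
Variables (R : realType) (H : lmodType R[i]) (ip : H -> H -> R[i]).
Hypothesis hh : is_hilbert ip.
Let hip : is_inner_product ip := proj1 hh.
Local Notation q := (hnormsq ip).

Definition ip2 (p r : H * H) : R[i] := ip p.1 r.1 + ip p.2 r.2.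

Lemma q2E p : hnormsq ip2 p = q p.1 + q p.2.
Proof. by rewrite /hnormsq /ip2 ReD. Qed.

Lemma prod_ip : is_inner_product ip2.
Proof.
split.
- move=> a p r s; rewrite /ip2 /= !(ipDl hip) !(ipZl hip) mulrDr.
  by rewrite addrACA.
- by move=> p r; rewrite /ip2 rmorphD /= -!(ipC hip).
- by move=> p; rewrite /ip2 addr_ge0 // ip_ge0.
- case=> a b; rewrite /ip2 /= => /eqP; rewrite paddr_eq0 ?ip_ge0 //.
  by case/andP => /eqP /(ip_eq0 hip) -> /eqP /(ip_eq0 hip) ->.
Qed.

Lemma prod_hilbert : is_hilbert ip2.
Proof.
split; first exact: prod_ip.
move=> u cau.
have c1 : hcauchy ip (fun n => (u n).1).
  move=> e e0; have [N HN] := cau e e0; exists N => m n hm hn.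
  have := HN m n hm hn; rewrite q2E /=.
  have := q_ge0 hip ((u m).2 - (u n).2); lra.
have c2 : hcauchy ip (fun n => (u n).2).
  move=> e e0; have [N HN] := cau e e0; exists N => m n hm hn.
  have := HN m n hm hn; rewrite q2E /=.
  have := q_ge0 hip ((u m).1 - (u n).1); lra.
have [x1 /(hconvP0 hip) h1] := proj2 hh _ c1.
have [x2 /(hconvP0 hip) h2] := proj2 hh _ c2.
exists (x1, x2); apply/(hconvP0 prod_ip) => e e0.
have e2 : 0 < e / 2 by lra.
have [N1 HN1] := h1 _ e2; have [N2 HN2] := h2 _ e2.
exists (maxn N1 N2) => n hn; rewrite q2E /=.
have := HN1 n (leq_trans (leq_maxl _ _) hn).
have := HN2 n (leq_trans (leq_maxr _ _) hn); lra.
Qed.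

Lemma hconv2_fst u p : hconv ip2 u p -> hconv ip (fun n => (u n).1) p.1.
Proof.
move/(hconvP0 prod_ip) => h; apply/(hconvP0 hip) => e e0.
have [N HN] := h e e0; exists N => n /HN; rewrite q2E /=.
have := q_ge0 hip ((u n).2 - p.2); lra.
Qed.
Lemma hconv2_snd u p : hconv ip2 u p -> hconv ip (fun n => (u n).2) p.2.
Proof.
move/(hconvP0 prod_ip) => h; apply/(hconvP0 hip) => e e0.
have [N HN] := h e e0; exists N => n /HN; rewrite q2E /=.
have := q_ge0 hip ((u n).1 - p.1); lra.
Qed.
End Prod.

Section Ops.
Variables (R : realType) (H : lmodType R[i]) (ip : H -> H -> R[i]).
Hypothesis hh : is_hilbert ip.
Let hip : is_inner_product ip := proj1 hh.
Local Notation q := (hnormsq ip).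
Local Notation adj := (adjoint ip).

Definition linrel (A : set (H * H)) :=
  A (0, 0) /\ forall a p r, A p -> A r -> A (a *: p.1 + r.1, a *: p.2 + r.2).

Lemma op_linrel A : is_operator A -> linrel A.
Proof. by case. Qed.

Lemma adj_linrel A : linrel (adj A).
Proof.
split; first by move=> x y _ /=; rewrite !(ip0r hip).
move=> a [u v] [u' v'] /= h1 h2 x y Axy /=.
by rewrite !(ipDr hip) !(ipZr hip) (h1 _ _ Axy) (h2 _ _ Axy).
Qed.

Section Lin.
Variable A : set (H * H).
Hypothesis hA : linrel A.
Lemma linD x y x' y' : A (x, y) -> A (x', y') -> A (x + x', y + y').
Proof. move=> h1 h2; have h := hA.2 1 _ _ h1 h2; rewrite /= !scale1r in h; exact h. Qed.
Lemma linZ a x y : A (x, y) -> A (a *: x, a *: y).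
Proof. move=> h1; have h := hA.2 a _ _ h1 hA.1; rewrite /= !addr0 in h; exact h. Qed.
Lemma linB x y x' y' : A (x, y) -> A (x', y') -> A (x - x', y - y').
Proof. move=> h1 h2; have h := linD h1 (linZ (-1) h2); rewrite !scaleN1r in h; exact h. Qed.
Lemma ran_sub : (ran A) 0 /\ forall a p r, ran A p -> ran A r -> ran A (a *: p + r).
Proof.
split; first by exists 0; exact: hA.1.
move=> a p r [x hx] [x' hx']; exists (a *: x + x').
exact: (hA.2 a (x, p) (x', r)).
Qed.
Lemma ker_sub : (ker A) 0 /\ forall a p r, ker A p -> ker A r -> ker A (a *: p + r).
Proof.
split; first exact: hA.1.
move=> a p r hp hr; have := hA.2 a (p, 0) (r, 0) hp hr.
by rewrite /= scaler0 addr0.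
Qed.
Lemma ranB x y : ran A x -> ran A y -> ran A (x - y).
Proof.
move=> hx hy; rewrite -scaleN1r addrC.
by apply: (ran_sub.2).
Qed.

Lemma mp_fun y a a' : mp_inverse ip A (y, a) -> mp_inverse ip A (y, a') -> a = a'.
Proof.
move=> [y1 [y2 [/= Hy o2 [_ ca] A1]]] [y1' [y2' [/= Hy' o2' [_ ca'] A1']]].
have E : y1 - y1' = y2' - y2.
  apply/eqP; rewrite subr_eq addrAC [y2' + y1']addrC -Hy' Hy addrK //.
have hB := linB A1 A1'.
have Z : y1 - y1' = 0.
  apply: (orth_self hip (S := ran A)); first by exists (a - a').
  by rewrite E; apply: orthB.
rewrite Z in hB.
apply/eqP; rewrite -subr_eq0; apply/eqP.
exact: (orth_self hip (S := ker A) hB (orthB hip ca ca')).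
Qed.

Lemma mp_carrier c : carrier ip A c -> exists y, A (c, y) /\ mp_inverse ip A (y, c).
Proof.
move=> hc; have [[y hy] co] := hc; exists y; split; first exact hy.
exists y, 0; split; [by rewrite /= addr0 | exact: orth0 | exact hc | exact hy].
Qed.

Lemma mp_orth r : orth ip (ran A) r -> mp_inverse ip A (r, 0).
Proof.
move=> hr; exists 0, r; split => //=; first by rewrite add0r.
- by split; [exists 0; exact: hA.1 | exact: orth0].
- exact: hA.1.
Qed.
End Lin.

Lemma adj_fun_total A u v v' : (forall y, exists a, A (y, a)) ->
  adj A (u, v) -> adj A (u, v') -> v = v'.
Proof.
move=> tot h1 h2.
have [a ha] := tot (v - v').
have := h1 _ _ ha; rewrite (h2 _ _ ha) /= => /eqP; rewrite eq_sym -subr_eq0.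
rewrite -(ipBr hip) => /eqP /(ip_eq0 hip) /eqP; rewrite subr_eq0 => /eqP //.
Qed.

Lemma orthorth (M : set H) : M 0 -> (forall a p r, M p -> M r -> M (a *: p + r)) ->
  seq_closed ip M -> forall z, orth ip (orth ip M) z -> M z.
Proof.
move=> M0 Ml Mc z hz.
have [m [Mm om]] := projection hh M0 Ml Mc z.
have : z - m = 0.
  apply: (orth_self hip (S := orth ip M)) => // w ow.
  rewrite (ipBr hip) hz // (orthl hip ow Mm) subr0 //.
by move/eqP; rewrite subr_eq0 => /eqP ->.
Qed.

Lemma dense_orth A m : densely_defined ip A -> orth ip (dom A) m -> m = 0.
Proof.
move=> hd om; have [u [Du /(hconvP0 hip) hu]] := hd m.
apply: (q_eq0 hip); apply/eqP; rewrite eq_le (q_ge0 hip) andbT.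
rewrite leNgt; apply/negP => qm.
have [N HN] := hu _ qm.
have := HN N (leqnn N); rewrite (qB hip).
have -> : bre ip (u N) m = 0 by rewrite /bre om.
have := q_ge0 hip (u N); lra.
Qed.

End Ops.

Section Main.
Variables (R : realType) (H : lmodType R[i]) (ip : H -> H -> R[i]).
Hypothesis hh : is_hilbert ip.
Let hip : is_inner_product ip := proj1 hh.
Local Notation adj := (adjoint ip).
Variable T : set (H * H).
Hypotheses (hop : is_operator T) (hdense : densely_defined ip T)
  (hclosed : closed_operator ip T) (hrange : closed_range ip T).

Let hT : linrel T := op_linrel hop.
Let hA : linrel (adj T) := adj_linrel hh T.
Let S := opcomp (adj T) T.
Let W := cauchy_dual ip T.
Let Td := mp_inverse ip T.

Lemma T_fun x y z : T (x, y) -> T (x, z) -> y = z.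
Proof. by case: hop => _ _; apply. Qed.

Lemma S_lin : linrel S.
Proof.
split; first by exists 0; split; [exact: hT.1 | exact: hA.1].
move=> a [x w] [x' w'] [z [h1 h2]] [z' [h1' h2']] /=.
exists (a *: z + z'); split.
  exact: (hT.2 a (x, z) (x', z') h1 h1').
exact: (hA.2 a (z, w) (z', w') h2 h2').
Qed.

Lemma W_fun y z z' : W (y, z) -> W (y, z') -> z = z'.
Proof.
move=> [s [h1 h2]] [s' [h1' h2']] /=.
have E := mp_fun hh S_lin h1 h1'; rewrite -E in h2'.
exact: T_fun h2 h2'.
Qed.

Lemma ker_closed : seq_closed ip (ker T).
Proof.
move=> u x hu hx; apply: (hclosed (v := fun _ => 0)) hu hx _.
apply/(hconvP0 hip) => e e0; exists 0%N => n _.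
by rewrite subrr /hnormsq (ip0r hip).
Qed.

Lemma dec_ker x : exists n c, [/\ x = n + c, ker T n & orth ip (ker T) c].
Proof.
have [k [Kk ok]] := projection hh (ker_sub hT).1 (ker_sub hT).2 ker_closed x.
by exists k, (x - k); split => //; rewrite addrC subrK.
Qed.

Lemma dec_ran y : exists y1 y2, [/\ y = y1 + y2, ran T y1 & orth ip (ran T) y2].
Proof.
have [k [Kk ok]] := projection hh (ran_sub hT).1 (ran_sub hT).2 hrange y.
by exists k, (y - k); split => //; rewrite addrC subrK.
Qed.

Lemma to_carrier x y : T (x, y) -> exists c, T (c, y) /\ carrier ip T c.
Proof.
move=> hxy; have [n [c [E kn oc]]] := dec_ker x.
have h := linB hT hxy kn; rewrite subr0 E addrAC subrr add0r in h.
by exists c; split => //; split => //; exists y.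
Qed.

Lemma Td_total y : exists a, Td (y, a).
Proof.
have [y1 [y2 [E [x hx] o2]]] := dec_ran y.
have [c [hc cc]] := to_carrier hx.
by exists c, y1, y2.
Qed.

Lemma W_eq_Td : (forall p, Td p -> W p) -> W = Td.
Proof.
move=> sub; apply/seteqP; split => [[y z] Wp|p /sub //].
have [a ha] := Td_total y.
by rewrite (W_fun Wp (sub _ ha)).
Qed.

Lemma vonNeumann h : exists x t a, [/\ T (x, t), adj T (t, a) & h = x + a].
Proof.
have hh2 := prod_hilbert hh.
have K0 : T 0 by exact: hT.1.
have Kl : forall a p r, T p -> T r -> T (a *: p + r).
  by move=> a p r Tp Tr; exact: (hT.2 a p r Tp Tr).
have Kc : seq_closed (ip2 ip) T.
  move=> u [x y] hu hx.
  apply: (hclosed (u := fun n => (u n).1) (v := fun n => (u n).2)).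
  - by move=> n; case: (u n) (hu n).
  - exact: (hconv2_fst hh hx).
  - exact: (hconv2_snd hh hx).
have [[x t] [Tk ok]] := projection hh2 K0 Kl Kc (h, 0).
exists x, t, (h - x); split => //; last by rewrite addrC subrK.
move=> x' y' Txy /=; have := ok (x', y') Txy.
rewrite /ip2 /= sub0r (ipNr hip) => /eqP; rewrite subr_eq0 => /eqP <- //.
Qed.

Lemma L y : orth ip (ran S) y -> ker T y.
Proof.
move=> oy; have [x [t [a [Txt At E]]]] := vonNeumann y.
have Sxa : S (x, a) by exists t.
have := oy a (ex_intro _ x Sxa); rewrite E (ipDr hip).
have h1 := At x t Txt; rewrite /= in h1.
rewrite (ipC hip x a) -h1 conjc_ge0id ?(ip_ge0 hip) // => /eqP.
rewrite paddr_eq0 ?(ip_ge0 hip) // => /andP [/eqP /(ip_eq0 hip) t0 /eqP /(ip_eq0 hip) a0].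
by rewrite a0 addr0 /ker /=; rewrite t0 in Txt.
Qed.

Lemma Td_sub_adjW p : Td p -> adj W p.
Proof.
case: p => y a [y1 [y2 [/= Ey o2 [_ ca] Ta]]] y' z' [s [[y1' [y2' [/= Ey' o2' _ [t [Tst At]]]]] Tsz]].
have tz := T_fun Tst Tsz; rewrite tz in At.
rewrite Ey Ey' (ipDr hip) (ipDl hip).
rewrite (o2 z' (ex_intro _ s Tsz)) addr0.
rewrite (ca y2' (L o2')) addr0.
have h := At a y1 Ta; rewrite /= in h.
by rewrite (ipC hip y1 z') h; exact: (esym (ipC hip a y1')).
Qed.

Section SA.
Hypothesis HT : T = adj T.
Let TA p : T p -> adj T p. Proof. by rewrite -HT. Qed.
Let AT p : adj T p -> T p. Proof. by rewrite -HT. Qed.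

Lemma kerE x : ker T x <-> orth ip (ran T) x.
Proof.
split.
  move=> kx w [x' hx']; have := @TA _ kx x' w hx'; rewrite /= (ip0r hip) //.
move=> ox; apply: AT => x' y' hxy /=; rewrite (ip0r hip); apply: ox.
by exists x'.
Qed.

Lemma carrier_ran a : carrier ip T a -> ran T a.
Proof.
move=> [_ ca]; apply: (orthorth hh (ran_sub hT).1 (ran_sub hT).2 hrange).
by move=> w /kerE kw; apply: ca.
Qed.

Lemma Td_sa : Td = adj Td.
Proof.
have sub : forall p, Td p -> adj Td p.
  case=> y a [y1 [y2 [/= Ey o2 ca Ta]]] y' a' [y1' [y2' [/= Ey' o2' ca' Ta']]].
  rewrite Ey Ey' (ipDr hip) (ipDl hip).
  rewrite (o2 a' (carrier_ran ca')) addr0.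
  rewrite (orthl hip o2' (carrier_ran ca)) addr0.
  by have := @TA _ Ta a' y1' Ta'.
apply/seteqP; split => [p /sub //|[u v] hv].
have [a ha] := Td_total u.
by rewrite (adj_fun_total hh Td_total hv (sub _ ha)).
Qed.

Lemma Td_sub_W p : Td p -> W p.
Proof.
case: p => y a hTd; have hTd' := hTd.
move: hTd' => [y1 [y2 [/= Ey o2 ca Ta]]].
have [s0 hs0] := carrier_ran ca.
have [s [Tsa cs]] := to_carrier hs0.
exists s; split => //.
exists y1, y2; split => //.
- move=> w [x [z [Txz Azw]]]; apply: o2; exists z; exact: AT.
- split; first by exists y1; exists a; split => //; exact: TA.
  move=> n' [z [Tnz Az0]].
  have kz : ker T z by exact: AT.
  have z0 : z = 0.
    by apply: (orth_self hip (S := ran T)); [exists n' | apply/kerE].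
  rewrite z0 in Tnz; exact: (proj2 cs n' Tnz).
- by exists a; split => //; exact: TA.
Qed.
End SA.

Section SA2.
Hypothesis HTd : Td = adj Td.
Let TdA p : Td p -> adj Td p. Proof. by rewrite -HTd. Qed.
Let ATd p : adj Td p -> Td p. Proof. by rewrite -HTd. Qed.

Lemma j1 n : ker T n -> orth ip (ran T) n.
Proof.
move=> kn; have : Td (n, 0).
  apply: ATd => y a [y1 [y2 [_ _ [_ ca] _]]] /=.
  by rewrite (ip0r hip) (orthl hip ca kn).
move=> [y1 [y2 [/= E o2 _ T0]]].
by rewrite E (T_fun T0 hT.1) add0r.
Qed.

Lemma j2 r : orth ip (ran T) r -> ker T r.
Proof.
move=> or.
have hr := TdA (mp_orth hh hT or).
have oc c : carrier ip T c -> ip c r = 0.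
  move=> cc; have [y [_ hy]] := mp_carrier hh cc.
  by have := hr _ _ hy; rewrite /= (ip0r hip).
have [n [m [E kn om]]] := dec_ker r.
have m0 : m = 0.
  apply: (dense_orth hh hdense) => d [yd Td'].
  have [n' [c [Ed kn' oc']]] := dec_ker d.
  have hc := linB hT Td' kn'; rewrite subr0 Ed addrAC subrr add0r in hc.
  rewrite Ed (ipDl hip) (om n' kn') add0r.
  have -> : m = r - n by rewrite E addrAC subrr add0r.
  rewrite (ipBr hip) (oc c) ?(orthl hip oc' kn) ?subr0 //.
  by split => //; exists yd.
by rewrite E m0 addr0.
Qed.

Lemma j3 z : orth ip (ker T) z -> ran T z.
Proof.
move=> oz; apply: (orthorth hh (ran_sub hT).1 (ran_sub hT).2 hrange).
by move=> w /j2 kw; apply: oz.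
Qed.

Lemma j4 x y x' y' : T (x, y) -> T (x', y') -> ip y' x = ip x' y.
Proof.
move=> Txy Txy'.
have [n [c [E kn oc]]] := dec_ker x.
have [n' [c' [E' kn' oc']]] := dec_ker x'.
have Tc : T (c, y).
  by have h := linB hT Txy kn; rewrite subr0 E addrAC subrr add0r in h.
have Tc' : T (c', y').
  by have h := linB hT Txy' kn'; rewrite subr0 E' addrAC subrr add0r in h.
rewrite E E' (ipDr hip) (ipDl hip).
rewrite (j1 kn (ex_intro _ c' Tc')) add0r.
rewrite (orthl hip (j1 kn') (ex_intro _ c Tc)) add0r.
have [y0 [Ty0 hy]] := mp_carrier hh (conj (ex_intro _ y Tc) oc).
have [y0' [Ty0' hy']] := mp_carrier hh (conj (ex_intro _ y' Tc') oc').
rewrite (T_fun Tc Ty0) (T_fun Tc' Ty0').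
by have := @TdA _ hy _ _ hy'.
Qed.

Lemma T_sa : T = adj T.
Proof.
apply/seteqP; split.
  by move=> [x y] Txy x' y' Txy'; exact: j4.
move=> [u v] Auv.
have [u1 [u2 [Eu [x1 Tu1] ou2]]] := dec_ran u.
have ku2 := j2 ou2.
have Au2 : adj T (u2, 0) by move=> x' y' Txy'; exact: j4.
have Au1 : adj T (u1, v).
  have h := linB hA Auv Au2; rewrite subr0 Eu addrK in h; exact h.
have ov : orth ip (ker T) v.
  move=> n kn; have := Auv n 0 kn; rewrite /= (ip0l hip) => <- //.
have [x0 hx0] := j3 ov.
have [e [Te ce]] := to_carrier hx0.
have : u1 - e = 0.
  apply: (orth_self hip (S := ran T)).
    apply: ranB => //; first by exists x1.
    exact: j3 (proj2 ce).
  move=> w [x hx]; rewrite (ipBr hip).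
  have h1 := Au1 x w hx; rewrite /= in h1.
  by rewrite h1 (j4 Te hx) subrr.
move/eqP; rewrite subr_eq0 => /eqP ue.
have h := linD hT (_ : T (u1, v)) ku2.
rewrite addr0 -Eu in h; apply: h.
by rewrite ue.
Qed.
End SA2.

End Main.

Unset Implicit Arguments.

Theorem theorem2p3 (R : realType) (H : lmodType R[i]) (ip : H -> H -> R[i])
    (T : set (H * H)) :
  is_hilbert ip ->
  is_operator T -> densely_defined ip T -> closed_operator ip T ->
  closed_range ip T ->
  (selfadjoint ip T <-> selfadjoint ip (cauchy_dual ip T)).
Proof.
move=> hh hop hd hc hr; split => HT.
  have E := W_eq_Td hh hop hc hr (fun p => @Td_sub_W _ _ _ hh _ hop hc hr HT p).
  rewrite /selfadjoint E; exact: (Td_sa hh hop hc hr HT).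
have sub : forall p, mp_inverse ip T p -> cauchy_dual ip T p.
  move=> p hp; rewrite HT; exact: (@Td_sub_adjW _ _ _ hh _ hop hc p hp).
have E := W_eq_Td hh hop hc hr sub.
rewrite /selfadjoint E in HT.
exact: (T_sa hh hop hd hc hr HT).
Qed.
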